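(* Let $\mathcal I$ be partial. For any policy $\pi$ with shielded policy $\pi'=\mathcal G(\pi)$ and any $h\ge0$, $$\Pr(s_\triangleright\in\xi^h\mid\pi,\mathcal M)\le\Pr(s_\triangleright\in\xi^h\mid\pi',\mathcal M)+\Pr(\xi^h\cap\mathcal I\neq\varnothing\mid\pi,\mathcal M),$$ where $s_\triangleright\in\xi^h$ means $s_t=s_\triangleright$ for some $t\le h$, and $\xi^h\cap\mathcal I\neq\varnothing$ means $(s_t,a_t)\in\mathcal I$ for some $t\le h$.
   Context: $\mathcal M=(\mathcal S,\mathcal A,P,r,\gamma)$ is a discounted MDP with discrete state and action spaces and initial distribution $d_0$; $\mathcal S$ contains two distinguished unsafe states $s_\triangleright,s_\circ$ and $\mathcal S_{\mathrm{safe}}=\mathcal S\setminus\{s_\triangleright,s_\circ\}$. $\Pr(\cdot\mid\pi,\mathcal M)$ is the law of trajectories $(s_0,a_0,s_1,\dots)$ of the stationary policy $\pi$ in $\mathcal M$ with $s_0\sim d_0$, and $\xi^h=(s_0,a_0,\dots,s_h,a_h)$. An intervention rule $\mathcal G=(\bar Q,\mu,\eta)$ (backup policy $\mu$, $\eta\in[0,1]$, $\bar Q:\mathcal S_{\mathrm{safe}}\times\mathcal A\to[0,1]$) has intervention set $\mathcal I=\{(s,a)\in\mathcal S_{\mathrm{safe}}\times\mathcal A:\bar Q(s,a)-\mathbb E_{a'\sim\mu(\cdot|s)}\bar Q(s,a')>\eta\}$ and shielded policy $\mathcal G(\pi)(a|s)=\pi(a|s)\mathbb 1\{(s,a)\notin\mathcal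 I\}+w(s)\mu(a|s)$, $w(s)=\sum_{\tilde a:(s,\tilde a)\in\mathcal I}\pi(\tilde a|s)$. A set $\mathcal X\subseteq\mathcal S_{\mathrm{safe}}\times\mathcal A$ is partial if for every $(s,a)\in\mathcal X$ there is $a'$ with $(s,a')\notin\mathcal X$. *)

(* Defs.v *)
From HB Require Import structures.
From mathcomp Require Import all_boot all_order all_algebra.
From mathcomp Require Import all_classical all_reals.
From mathcomp Require Import ereal esum.
Set Implicit Arguments. Unset Strict Implicit. Unset Printing Implicit Defensive.
Import Order.TTheory GRing.Theory Num.Theory.
Local Open Scope classical_set_scope.
Local Open Scope ring_scope.

Section MDP.
Context {R : realType} {S A : countType}.

Definition is_distr (T : countType) (p : T -> R) : Prop :=
  (forall x, 0 <= p x) /\ (\esum_(x in [set: T]) (p x)%:E = 1%E).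

(* a stationary (stochastic) policy pi(a|s) = pi s a *)
Definition is_policy (pi : S -> A -> R) : Prop := forall s, is_distr (pi s).

(* transition kernel P(s'|s,a) = P s a s' *)
Definition is_kernel (P : S -> A -> S -> R) : Prop :=
  forall s a, is_distr (P s a).

(* S_safe = S \ {s_tri, s_circ} *)
Definition safe (st so : S) (s : S) : Prop := s <> st /\ s <> so.

Definition expQ (Qbar : S -> A -> R) (mu : S -> A -> R) (s : S) : \bar R :=
  \esum_(a' in [set: A]) (mu s a' * Qbar s a')%:E.

Definition interv (st so : S) (Qbar : S -> A -> R) (mu : S -> A -> R) (eta : R)
  (s : S) (a : A) : Prop :=
  safe st so s /\ ((Qbar s a)%:E - expQ Qbar mu s > eta%:E)%E.

Definition partial_set (X : S -> A -> Prop) : Prop :=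
  forall s a, X s a -> exists a', ~ X s a'.

Definition wmass (I : S -> A -> Prop) (pi : S -> A -> R) (s : S) : R :=
  fine (\esum_(a in [set a | I s a]) (pi s a)%:E).

Definition shield (I : S -> A -> Prop) (mu pi : S -> A -> R) : S -> A -> R :=
  fun s a => pi s a * (if `[< I s a >] then 0 else 1) + wmass I pi s * mu s a.

(* probability weight of the prefix xi^h = [:: (s_0,a_0); ...; (s_h,a_h)]
   under the trajectory law of pi in M with s_0 ~ d0 *)
Fixpoint wtail (P : S -> A -> S -> R) (pi : S -> A -> R) (x : S * A)
  (xs : seq (S * A)) : R :=
  match xs with
  | [::] => 1
  | y :: ys => P x.1 x.2 y.1 * pi y.1 y.2 * wtail P pi y ys
  end.

Definition pweight (d0 : S -> R) (P : S -> A -> S -> R) (pi : S -> A -> R)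
  (xi : seq (S * A)) : R :=
  match xi with
  | [::] => 0
  | x :: xs => d0 x.1 * pi x.1 x.2 * wtail P pi x xs
  end.

Definition prefix_prob (d0 : S -> R) (P : S -> A -> S -> R) (pi : S -> A -> R)
  (h : nat) (E : seq (S * A) -> Prop) : \bar R :=
  \esum_(xi in [set xi : seq (S * A) | size xi = h.+1 /\ E xi])
     (pweight d0 P pi xi)%:E.

Definition visits (s : S) (xi : seq (S * A)) : Prop :=
  exists2 x, x \in xi & x.1 = s.

Definition meets_set (I : S -> A -> Prop) (xi : seq (S * A)) : Prop :=
  exists2 x, x \in xi & I x.1 x.2.

End MDP.

(* Main.v *)
Require Import Defs.
From HB Require Import structures.
From mathcomp Require Import all_boot all_order all_algebra.
From mathcomp Require Import all_classical all_reals.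
From mathcomp Require Import ereal esum.
Import Order.TTheory GRing.Theory Num.Theory.
Local Open Scope classical_set_scope.
Local Open Scope ring_scope.

Lemma esum_subset_le (R : realType) (T : choiceType) (X Y : set T) (a : T -> \bar R) :
  X `<=` Y -> (forall i, Y i -> (0 <= a i)%E) ->
  (\esum_(i in X) a i <= \esum_(i in Y) a i)%E.
Proof.
move=> XY a0; rewrite (esum_mkcond X) (esum_mkcond Y); apply: le_esum => i _.
case: ifPn => [/set_mem/XY Yi|_]; first by rewrite ifT //; exact: mem_set.
by case: ifPn => // /set_mem /a0.
Qed.

Section Aux.
Variables (R : realType) (S A : countType).
Variables (P : S -> A -> S -> R) (d0 : S -> R).
Hypothesis P0 : forall s a s', 0 <= P s a s'.
Hypothesis d00 : forall s, 0 <= d0 s.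

Lemma wtail_ge0 (pi : S -> A -> R) : (forall s a, 0 <= pi s a) ->
  forall xs x, 0 <= wtail P pi x xs.
Proof.
move=> pi0; elim=> [|y ys IH] x /=; first by [].
by rewrite !mulr_ge0.
Qed.

Lemma pweight_ge0 (pi : S -> A -> R) : (forall s a, 0 <= pi s a) ->
  forall xi, 0 <= pweight d0 P pi xi.
Proof.
move=> pi0 [|x xs] /=; first by [].
by rewrite !mulr_ge0 // wtail_ge0.
Qed.

Variables (I : S -> A -> Prop) (pi pi' : S -> A -> R).
Hypothesis pi0 : forall s a, 0 <= pi s a.
Hypothesis pile : forall s a, ~ I s a -> pi s a <= pi' s a.

Lemma wtail_le xs : forall x, (forall y, y \in xs -> ~ I y.1 y.2) ->
  wtail P pi x xs <= wtail P pi' x xs.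
Proof.
elim: xs => [|y ys IH] x Hn /=; first by [].
have Hy : ~ I y.1 y.2 by apply: Hn; rewrite in_cons eqxx.
have Hys : forall z, z \in ys -> ~ I z.1 z.2.
  by move=> z zi; apply: Hn; rewrite in_cons zi orbT.
apply: ler_pM; [by rewrite mulr_ge0|exact: wtail_ge0|
  |exact: IH].
apply: ler_pM; by [|apply: P0|apply: pi0|apply: pile].
Qed.

Lemma pweight_le xi : (forall y, y \in xi -> ~ I y.1 y.2) ->
  pweight d0 P pi xi <= pweight d0 P pi' xi.
Proof.
case: xi => [|x xs] Hn //=.
have Hx : ~ I x.1 x.2 by apply: Hn; rewrite in_cons eqxx.
apply: ler_pM; [by rewrite mulr_ge0|exact: wtail_ge0| |].
  apply: ler_pM; by [|apply: d00|apply: pi0|apply: pile].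
apply: wtail_le => y yi; apply: Hn; by rewrite in_cons yi orbT.
Qed.
End Aux.

Theorem mainTheorem17 (R : realType) (S A : countType)
  (P : S -> A -> S -> R) (d0 : S -> R)
  (st so : S) (Qbar : S -> A -> R) (mu : S -> A -> R) (eta : R)
  (pi : S -> A -> R) (h : nat) :
  is_kernel P -> is_distr d0 -> st <> so ->
  is_policy mu -> 0 <= eta <= 1 ->
  (forall s a, safe st so s -> 0 <= Qbar s a <= 1) ->
  partial_set (interv st so Qbar mu eta) ->
  is_policy pi ->
  (prefix_prob d0 P pi h (visits st) <=
   prefix_prob d0 P (shield (interv st so Qbar mu eta) mu pi) h (visits st)
   + prefix_prob d0 P pi h (meets_set (interv st so Qbar mu eta)))%E.
Proof.
move=> HP Hd0 _ Hmu _ _ _ Hpi.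
set I := interv st so Qbar mu eta.
set pi' := shield I mu pi.
have P0 : forall s a s', 0 <= P s a s' by move=> s a; case: (HP s a).
have d00 : forall s, 0 <= d0 s by case: Hd0.
have pi0 : forall s a, 0 <= pi s a by move=> s; case: (Hpi s).
have mu0 : forall s a, 0 <= mu s a by move=> s; case: (Hmu s).
have w0 : forall s, 0 <= wmass I pi s.
  move=> s; apply: fine_ge0; apply: esum_ge0 => a _; rewrite lee_fin.
  exact: pi0.
have pile : forall s a, ~ I s a -> pi s a <= pi' s a.
  move=> s a nI; rewrite /pi' /shield asboolF // mulr1 lerDl.
  by rewrite mulr_ge0.
have pi'0 : forall s a, 0 <= pi' s a.
  move=> s a; rewrite /pi' /shield addr_ge0 // mulr_ge0 //; by case: asboolP.
clearbody pi' I.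
have f0 : forall xi, (0 <= (pweight d0 P pi xi)%:E)%E.
  by move=> xi; rewrite lee_fin pweight_ge0.
rewrite /prefix_prob.
rewrite (esumID (meets_set I)); last by move=> i _; exact: f0.
rewrite addeC; apply: leeD.
- apply: (@le_trans _ _ (\esum_(xi in [set xi : seq (S * A) | size xi = h.+1 /\ visits st xi] `&` ~` meets_set I) (pweight d0 P pi' xi)%:E)).
    apply: le_esum => xi [_ nm]; rewrite lee_fin; apply: (@pweight_le R S A P d0 P0 d00 I pi pi' pi0 pile).
    by move=> y yi Iy; exact: (nm (ex_intro2 _ _ y yi Iy)).
  apply: esum_subset_le; first by move=> xi [].
  by move=> xi _; rewrite lee_fin pweight_ge0.
- apply: esum_subset_le; last by move=> xi _; exact: f0.
  by move=> xi [[sz _] m].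
Qed.
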